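(* For every integer $m\ge2$ and every $\alpha\in[0,1]$, every deterministic social choice rule on $m$ candidates has distortion at least $2+\alpha-2(1-\alpha)/\lfloor m\rfloor_{\mathrm{even}}$ on $\alpha$-decisive metric spaces, where $\lfloor m\rfloor_{\mathrm{even}}$ is the largest even integer at most $m$.
   Context: An election: voters $V=\{1,\dots,n\}$, a fixed finite set $C$ of $m$ candidates, a profile $\sigma$ of linear orders over $C$. A distance function $d$ on $V\cup C$ is nonnegative, symmetric and satisfies the triangle inequality (co-location allowed); it is consistent with $\sigma$ if $d(i,c)\le d(i,c')$ whenever $i$ ranks $c$ above $c'$. $\mathrm{top}(i)$ is $i$'s first choice. $d$ is $\alpha$-decisive if $d(i,\mathrm{top}(i))\le\alpha\,d(i,c)$ for every voter $i$ and every $c\ne\mathrm{top}(i)$. $\mathrm{SC}(c)=\sum_{i\in V}d(i,c)$. A deterministic social choice rule maps each profile (any number of voters) to a candidate; its distortion on $\alpha$-decisive metric spaces is $\sup_\sigma\sup_d \mathrm{SC}(f(\sigma))/\min_c\mathrm{SC}(c)$ over $\alpha$-decisive $d$ consistent with $\sigma$. *)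

(* Defs.v *)
From HB Require Import structures.
From mathcomp Require Import all_boot all_order all_algebra all_fingroup.
From mathcomp Require Import reals.
Set Implicit Arguments. Unset Strict Implicit. Unset Printing Implicit Defensive.
Import Order.TTheory GRing.Theory Num.Theory.
Local Open Scope ring_scope.

(* A profile of n voters over the candidates 'I_m: voter i's linear order is
   given by the permutation (σ i), where (σ i c) is the position of candidate c
   in i's ranking (position 0 = first choice). *)
Definition profile (n m : nat) := 'I_n -> {perm 'I_m}.

Definition prefers n m (s : profile n m) (i : 'I_n) (c c' : 'I_m) : bool :=
  (s i c < s i c')%N.

Definition is_top n m (s : profile n m) (i : 'I_n) (c : 'I_m) : bool :=
  (nat_of_ord (s i c) == 0)%N.

Definition point (n m : nat) := ('I_n + 'I_m)%type.

(* distance function on V ∪ C (co-location allowed) *)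
Definition is_distance (R : realType) n m (d : point n m -> point n m -> R) : Prop :=
  [/\ (forall x y, 0 <= d x y),
      (forall x, d x x = 0),
      (forall x y, d x y = d y x) &
      (forall x y z, d x z <= d x y + d y z)].

Definition consistent (R : realType) n m (s : profile n m)
    (d : point n m -> point n m -> R) : Prop :=
  forall i c c', prefers s i c c' -> d (inl i) (inr c) <= d (inl i) (inr c').

Definition decisive (R : realType) (alpha : R) n m (s : profile n m)
    (d : point n m -> point n m -> R) : Prop :=
  forall i c c', is_top s i c -> c' != c ->
    d (inl i) (inr c) <= alpha * d (inl i) (inr c').

Definition SC (R : realType) n m (d : point n m -> point n m -> R) (c : 'I_m) : R :=
  \sum_(i < n) d (inl i) (inr c).

Definition social_choice_rule (m : nat) := forall n, profile n m -> 'I_m.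

Definition floor_even (m : nat) : nat := (m - odd m)%N.

(* Main.v *)
Require Import Defs.
From HB Require Import structures.
From mathcomp Require Import all_boot all_order all_algebra all_fingroup.
From mathcomp Require Import reals.
From mathcomp Require Import ring lra zify.
Import Order.TTheory GRing.Theory Num.Theory.
Local Open Scope ring_scope.

Definition dstar (R : realType) n m (cls : point n m -> nat) (h : nat -> R)
  (p q : point n m) : R :=
  if cls p == cls q then 0 else h (cls p) + h (cls q).

Lemma dstar_dist (R : realType) n m cls (h : nat -> R) :
  (forall x, 0 <= h x) -> is_distance (@dstar R n m cls h).
Proof.
move=> h0; split.
- move=> x y; rewrite /dstar; case: ifP => // _; exact: addr_ge0.
- by move=> x; rewrite /dstar eqxx.
- move=> x y; rewrite /dstar eq_sym; case: ifP => // _; exact: addrC.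
- move=> x y z; rewrite /dstar.
  move: (cls x) (cls y) (cls z) => a b c.
  have ha := h0 a; have hb := h0 b; have hc := h0 c.
  case: (eqVneq a c) => [<-|ac].
    by apply: addr_ge0; case: ifP => _ //; apply: addr_ge0.
  case: (eqVneq a b) => [<-|ab]; first by rewrite (negbTE ac); lra.
  case: (eqVneq b c) => [<-|bc]; first by lra.
  lra.
Qed.

Lemma comb_dist (R : realType) n m (d1 d2 : point n m -> point n m -> R) (a b : R) :
  is_distance d1 -> is_distance d2 -> 0 <= a -> 0 <= b ->
  is_distance (fun p q => a * d1 p q + b * d2 p q).
Proof.
move=> [p1 z1 s1 t1] [p2 z2 s2 t2] ha hb; split.
- by move=> x y; apply: addr_ge0; apply: mulr_ge0.
- by move=> x; rewrite z1 z2 !mulr0 addr0.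
- by move=> x y; rewrite s1 s2.
- move=> x y z.
  have e1 := ler_wpM2l ha (t1 x y z); have e2 := ler_wpM2l hb (t2 x y z).
  rewrite !mulrDr in e1 e2; lra.
Qed.



Definition side_pt {k m} (p : point (k + k) m) : bool :=
  match p with inl i => (i < k)%N | inr c => (c < k)%N end.
Definition spread {k m} (s : bool) (p : point (k + k) m) : bool := side_pt p == s.
Definition cls0 {k m} s (p : point (k + k) m) : nat :=
  if spread s p then (match p with inl i => nat_of_ord i | inr c => nat_of_ord c end).+1 else 0%N.
Definition cls1 {k m} s (p : point (k + k) m) : nat :=
  if spread s p then (match p with inl _ => 0%N | inr c => (nat_of_ord c).+2 end) else 1%N.
Definition h1 (R : realType) (n : nat) : R := if n == 0%N then 0 else 1.
Definition dist {R : realType} (alpha : R) {k m} s (p q : point (k + k) m) : R :=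
  (1 - alpha) * @dstar R _ _ (cls0 s) (fun _ => 1/2) p q + alpha * @dstar R _ _ (cls1 s) (@h1 R) p q.

Lemma dist_ok (R : realType) (alpha : R) k m s :
  0 <= alpha -> alpha <= 1 -> is_distance (@dist R alpha k m s).
Proof.
move=> a0 a1; apply: comb_dist; try lra.
- by apply: dstar_dist => _; lra.
- by apply: dstar_dist => x; rewrite /h1; case: ifP => _; lra.
Qed.

Lemma L1 (R : realType) (alpha : R) k m s (i : 'I_(k + k)) (c : 'I_m) :
  @spread k m s (inl i) ->
  dist alpha s (inl i) (inr c) = if (nat_of_ord c == nat_of_ord i)%N then alpha else 1.
Proof.
rewrite /dist /dstar /cls0 /cls1 /h1 /spread /= => /eqP hi.
case: (eqVneq (c < k)%N s) => hc.
- rewrite hi eqxx /= eqSS [(nat_of_ord c == _)]eq_sym.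
  case: ifP => _; lra.
- rewrite hi eqxx /=.
  have -> : (nat_of_ord c == i)%N = false.
    apply/negP => /eqP e; move: hc; rewrite e hi eqxx //.
  lra.
Qed.

Lemma L2 (R : realType) (alpha : R) k m s (i : 'I_(k + k)) (c : 'I_m) :
  ~~ @spread k m s (inl i) ->
  dist alpha s (inl i) (inr c) = if @spread k m s (inr c) then 1 + alpha else 0.
Proof.
rewrite /dist /dstar /cls0 /cls1 /h1 /= => hi.
rewrite (negbTE hi).
by case: (@spread k m s (inr c)) => /=; lra.
Qed.



Definition ci {k m} (Hkm : (k + k <= m)%N) (i : 'I_(k+k)) : 'I_m := widen_ord Hkm i.
Definition tau {k} m (i : 'I_(k+k)) : {perm 'I_m} :=
  if (i < k)%N then 1%g else perm (@rev_ord_inj m).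
Definition sigma {k m} (Hkm : (k + k <= m)%N) (z : 'I_m) : profile (k+k) m :=
  fun i => (tau m i * tperm (tau m i (ci Hkm i)) z)%g.

Lemma sigmaE k m Hkm z i c :
  @sigma k m Hkm z i c = tperm (tau m i (ci Hkm i)) z (tau m i c).
Proof. by rewrite /sigma permM. Qed.

Lemma top_ci k m Hkm (z : 'I_m) i c : nat_of_ord z = 0%N ->
  is_top (@sigma k m Hkm z) i c -> c = ci Hkm i.
Proof.
move=> z0; rewrite /is_top sigmaE -z0 => /eqP/val_inj.
case: tpermP => [h _ | h e | _ ne e].
- by apply: (perm_inj h).
- by apply: (@perm_inj _ (tau m i)); rewrite h e.
- by case: ne.
Qed.

Lemma sigma_ci k m Hkm z i : @sigma k m Hkm z i (ci Hkm i) = z.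
Proof. by rewrite sigmaE tpermL. Qed.

Lemma tau_side k m (Hkm : (k + k <= m)%N) (i : 'I_(k+k)) (c : 'I_m) :
  (tau m i c < (if (i < k)%N then k else m - k))%N = ((c < k)%N == (i < k)%N).
Proof.
rewrite /tau; case: ifP => hi.
- by rewrite perm1 eqb_id.
- rewrite permE /=; have := ltn_ord c; case: (ltnP c k) => hc hcm /=; lia.
Qed.

Lemma tperm_lt m (a b x : 'I_m) L : (a < L)%N -> (b < L)%N ->
  (tperm a b x < L)%N = (x < L)%N.
Proof. by rewrite permE /= => ha hb; case: eqP => [->|_]; [|case: eqP => [->|_]]; rewrite ?ha ?hb. Qed.

Lemma own_side k m (Hkm : (k + k <= m)%N) (hk : (0 < k)%N) (z : 'I_m) i c c' :
  nat_of_ord z = 0%N ->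
  prefers (@sigma k m Hkm z) i c c' -> (c' < k)%N = (i < k)%N -> (c < k)%N = (i < k)%N.
Proof.
move=> z0; rewrite /prefers !sigmaE => hp hc'.
set L := (if (i < k)%N then k else m - k)%N.
have hL : (0 < L)%N by rewrite /L; case: ifP => _; lia.
have ha : (tau m i (ci Hkm i) < L)%N by rewrite tau_side //= eqxx.
have hz : (z < L)%N by rewrite z0.
have := @tau_side k m Hkm i c'; rewrite -/L hc' eqxx -(@tperm_lt m _ _ (tau m i c') L ha hz) => h'.
have := @tau_side k m Hkm i c; rewrite -/L -(@tperm_lt m _ _ (tau m i c) L ha hz).
have -> : (tperm (tau m i (ci Hkm i)) z (tau m i c) < L)%N by apply: ltn_trans hp h'.
by move/esym/eqP.
Qed.



Lemma sum_halves (R : realType) k (a b : R) (s : bool) :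
  \sum_(i < k + k) (if ((i < k)%N == s) then a else b) = k%:R * a + k%:R * b.
Proof.
have e1 : \sum_(i < k) (if ((lshift k i < k)%N == s) then a else b) = k%:R * (if s then a else b).
  rewrite (eq_bigr (fun _ => if s then a else b)).
    by rewrite sumr_const card_ord mulr_natl.
  by move=> i _; rewrite /= ltn_ord; case: s.
have e2 : \sum_(i < k) (if ((rshift k i < k)%N == s) then a else b) = k%:R * (if s then b else a).
  rewrite (eq_bigr (fun _ => if s then b else a)).
    by rewrite sumr_const card_ord mulr_natl.
  by move=> i _; rewrite /= ltnNge leq_addr; destruct s.
rewrite big_split_ord e1 e2.
by clear e1 e2; case: s => //; rewrite addrC.
Qed.

Lemma SC_O (R : realType) (alpha : R) k m s (O : 'I_m) :
  ~~ @spread k m s (inr O) -> SC (@dist R alpha k m s) O = k%:R.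
Proof.
move=> hO; rewrite /SC.
rewrite (eq_bigr (fun i : 'I_(k+k) => if ((i < k)%N == s) then 1 else 0)); last first.
  move=> i _; case hi: (@spread k m s (inl i)).
  - rewrite L1 //.
    have -> : (nat_of_ord O == i) = false.
      apply/negP => /eqP e; move: hO; rewrite /spread /= e.
      by move: hi; rewrite /spread /= => ->.
    by move: hi; rewrite /spread /= => ->.
  - rewrite L2 ?hi // (negbTE hO).
    by move: hi; rewrite /spread /= => ->.
by rewrite sum_halves mulr1 mulr0 addr0.
Qed.

Lemma sum_ind (R : realType) n (w : nat) :
  \sum_(i < n) (if (w == nat_of_ord i) then 1 else 0 : R) <= 1.
Proof.
case: (ltnP w n) => hw.
- rewrite (bigD1 (Ordinal hw)) //= eqxx big1 ?addr0 //.
  move=> i hi; case: eqP => // e; exfalso; move: hi.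
  by apply/negP/negPn/eqP; apply: val_inj.
- rewrite big1 ?ler01 //.
  move=> i _; case: eqP => // e; have := ltn_ord i; lia.
Qed.

Lemma SC_W (R : realType) (alpha : R) k m s (W : 'I_m) :
  @spread k m s (inr W) -> alpha <= 1 ->
  k%:R + k%:R * (1 + alpha) - (1 - alpha) <= SC (@dist R alpha k m s) W.
Proof.
move=> hW a1; rewrite /SC.
rewrite (eq_bigr (fun i : 'I_(k+k) => (if ((i < k)%N == s) then 1 else 1 + alpha)
   - (1 - alpha) * (if (nat_of_ord W == i) then 1 else 0))); last first.
  move=> i _; case hi: (@spread k m s (inl i)).
  - rewrite L1 //.
    move: hi; rewrite /spread /= => ->.
    by case: ifP => _; lra.
  - rewrite L2 ?hi // hW.
    have -> : (nat_of_ord W == i) = false.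
      apply/negP => /eqP e; move: hW; rewrite /spread /= e.
      by move: hi; rewrite /spread /= => ->.
    by move: hi; rewrite /spread /= => ->; lra.
rewrite sumrB sum_halves -mulr_sumr mulr1.
have h := sum_ind R (k + k) (nat_of_ord W).
have h2 := ler_wpM2l (_ : 0 <= 1 - alpha) h.
rewrite mulr1 in h2; lra.
Qed.



Theorem theorem2 (R : realType) (m : nat) (hm : (2 <= m)%N) (alpha : R)
  (ha0 : 0 <= alpha) (ha1 : alpha <= 1) (f : social_choice_rule m)
  (eps : R) (heps : 0 < eps) :
  exists (n : nat) (s : profile n m) (d : point n m -> point n m -> R),
    [/\ is_distance d, consistent s d, decisive alpha s d &
      exists c : 'I_m, 0 < SC d c /\
        (2 + alpha - 2 * (1 - alpha) / (floor_even m)%:R - eps) * SC d c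
          <= SC d (f n s)].
Proof.
pose k := m./2.
have hk : (0 < k)%N by rewrite /k -divn2; lia.
have Hkm : (k + k <= m)%N by rewrite /k -divn2; lia.
have hfe : floor_even m = (k + k)%N by rewrite /floor_even /k -divn2 -modn2; lia.
have hm0 : (0 < m)%N by lia.
have hkm' : (k < m)%N by lia.
pose z : 'I_m := Ordinal hm0.
have z0 : nat_of_ord z = 0%N by [].
pose sg := sigma Hkm z.
pose W := f (k + k)%N sg.
pose s := (W < k)%N.
pose O : 'I_m := if s then Ordinal hkm' else z.
have hW : @spread k m s (inr W) by rewrite /spread /= eqxx.
have hO : ~~ @spread k m s (inr O).
  by rewrite /spread /O /=; case: ifP => /= hs; rewrite ?ltnn ?hk ?hs.
exists (k + k)%N, sg, (@dist R alpha k m s); split.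
- exact: dist_ok.
- move=> i c c' hp.
  case hi: (@spread k m s (inl i)).
  + rewrite !L1 //.
    have -> : (nat_of_ord c' == i) = false.
      apply/negP => /eqP e.
      have ec : c' = ci Hkm i by apply: val_inj.
      by move: hp; rewrite /prefers ec sigma_ci z0 ltn0.
    by case: ifP => _; lra.
  + rewrite !L2 ?hi //.
    case hc': (@spread k m s (inr c')); first by case: ifP => _; lra.
    have e : (c' < k)%N = (i < k)%N.
      move: hi hc'; rewrite /spread /=.
      by case: (c' < k)%N; case: (i < k)%N; case: (s).
    have := @own_side k m Hkm hk z i c c' z0 hp e.
    move: hi; rewrite /spread /= => hi ->; rewrite hi; lra.
- move=> i c c' ht hne.
  have ec := @top_ci k m Hkm z i c z0 ht; subst c.
  case hi: (@spread k m s (inl i)).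
  + rewrite !L1 // eqxx.
    have -> : (nat_of_ord c' == i) = false.
      apply/negP => /eqP e.
      have ec : c' = ci Hkm i by apply: val_inj.
      by rewrite ec eqxx in hne.
    by rewrite mulr1.
  + rewrite !L2 ?hi //.
    have -> : @spread k m s (inr (ci Hkm i)) = false by rewrite -hi.
    by case: ifP => _; rewrite ?mulr0 //; apply: mulr_ge0 => //; lra.
- exists O; rewrite SC_O //; split; first by rewrite ltr0n.
  have hSW := @SC_W R alpha k m s W hW ha1.
  rewrite hfe natrD.
  have kp : (0 < k%:R :> R) by rewrite ltr0n.
  have -> : (2 + alpha - 2 * (1 - alpha) / (k%:R + k%:R) - eps) * k%:R
      = 2 * k%:R + alpha * k%:R - (1 - alpha) - eps * k%:R.
    by field; lra.
  have : 0 < eps * k%:R by apply: mulr_gt0.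
  lra.
Qed.
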